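(* For all nonnegative integers $n$ and $k$ with $k\le n$, $$W_{m,r}[n,k]_q=\sum_{j=0}^{n-k}(-1)^{j}\,q^{-r-m(k+j)}\,\frac{r_{k+j+1,q}}{r_{k+1,q}}\,W_{m,r}[n+1,k+j+1]_q ,$$ where $r_{i,q}=\prod_{h=1}^{i-1}q^{-r-mh+m}[mh+r]_q$, so that $\frac{r_{k+j+1,q}}{r_{k+1,q}}$ stands for $\prod_{h=k+1}^{k+j}q^{-r-mh+m}[mh+r]_q$ (equal to $1$ when $j=0$).
   Context: Fix a real number $q>0$ with $q\neq 1$, a positive integer $m$ and a complex number $r$. For complex $x$ put $q^x=e^{x\ln q}$ and $[x]_q=\frac{1-q^x}{1-q}$. The numbers $W_{m,r}[n,k]_q$ (a $q$-analogue of the $r$-Whitney numbers of the second kind), for integers $n,k$, are defined by $W_{m,r}[0,0]_q=1$, $W_{m,r}[n,k]_q=0$ whenever $n<k$ or $n<0$ or $k<0$, and, for $n\ge 1$ and $0\le k\le n$, $$W_{m,r}[n,k]_q=q^{m(k-1)+r}\,W_{m,r}[n-1,k-1]_q+[mk+r]_q\,W_{m,r}[n-1,k]_q .$$ *)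

(* Defs.v *)
From Stdlib Require Import Reals.
Open Scope R_scope.

Record Cx : Type := Cmk { Cre : R ; Cim : R }.

Definition RtoC (x : R) : Cx := Cmk x 0.
Definition C0 : Cx := RtoC 0.
Definition C1 : Cx := RtoC 1.
Definition Cadd (x y : Cx) : Cx := Cmk (Cre x + Cre y) (Cim x + Cim y).
Definition Copp (x : Cx) : Cx := Cmk (- Cre x) (- Cim x).
Definition Csub (x y : Cx) : Cx := Cadd x (Copp y).
Definition Cmul (x y : Cx) : Cx :=
  Cmk (Cre x * Cre y - Cim x * Cim y) (Cre x * Cim y + Cim x * Cre y).
Definition Cinv (x : Cx) : Cx :=
  let d := Cre x * Cre x + Cim x * Cim x in Cmk (Cre x / d) (- Cim x / d).
Definition Cdiv (x y : Cx) : Cx := Cmul x (Cinv y).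

Definition Cexp (z : Cx) : Cx :=
  Cmk (exp (Cre z) * cos (Cim z)) (exp (Cre z) * sin (Cim z)).

Definition qpow (q : R) (x : Cx) : Cx := Cexp (Cmul x (RtoC (ln q))).

Definition qint (q : R) (x : Cx) : Cx := Cdiv (Csub C1 (qpow q x)) (RtoC (1 - q)).

Fixpoint Csum (f : nat -> Cx) (n : nat) : Cx :=
  match n with O => C0 | S n' => Cadd (Csum f n') (f n') end.
Fixpoint Cprod (f : nat -> Cx) (n : nat) : Cx :=
  match n with O => C1 | S n' => Cmul (Cprod f n') (f n') end.

Definition natC (j : nat) : Cx := RtoC (INR j).

(* q-analogue of r-Whitney numbers of the second kind, W_{m,r}[n,k]_q,
   for n, k >= 0 (negative indices give 0 by definition). *)
Fixpoint W (q : R) (m : nat) (r : Cx) (n k : nat) {struct n} : Cx :=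
  match n with
  | O => match k with O => C1 | S _ => C0 end
  | S n' =>
      if Nat.leb k n then
        match k with
        | O => (* W[n-1,-1] = 0 *)
            Cmul (qint q (Cadd (natC (m * 0)) r)) (W q m r n' 0)
        | S k' =>
            Cadd (Cmul (qpow q (Cadd (natC (m * k')) r)) (W q m r n' k'))
                 (Cmul (qint q (Cadd (natC (m * k)) r)) (W q m r n' k))
        end
      else C0
  end.

(* Main.v *)
From Pilot Require Import Defs.
From Stdlib Require Import Reals Lia.
Open Scope R_scope.
Import Pilot.Defs.

Lemma Cx_eq : forall x y : Cx, Cre x = Cre y -> Cim x = Cim y -> x = y.
Proof. intros [a b] [c d]; simpl; intros; subst; reflexivity. Qed.

Lemma Cring : ring_theory C0 C1 Cadd Cmul Csub Copp (@eq Cx).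
Proof.
  constructor; intros;
  repeat match goal with x : Cx |- _ => destruct x end;
  unfold Csub, C0, C1, RtoC, Cadd, Copp, Cmul; simpl; f_equal; ring.
Qed.
Add Ring CxRing : Cring.

Lemma Cexp_add : forall a b, Cexp (Cadd a b) = Cmul (Cexp a) (Cexp b).
Proof.
  intros [a b] [c d]; unfold Cexp, Cadd, Cmul; simpl; f_equal;
  rewrite exp_plus, ?cos_plus, ?sin_plus; ring.
Qed.

Lemma Cexp_0 : Cexp C0 = C1.
Proof. unfold Cexp, C0, C1, RtoC; simpl; rewrite exp_0, cos_0, sin_0; f_equal; ring. Qed.

Lemma qpow_add : forall q a b, qpow q (Cadd a b) = Cmul (qpow q a) (qpow q b).
Proof.
  intros; unfold qpow. rewrite <- Cexp_add. f_equal. ring.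
Qed.

Lemma qpow_0 : forall q, qpow q C0 = C1.
Proof.
  intros; unfold qpow. replace (Cmul C0 (RtoC (ln q))) with C0 by ring. apply Cexp_0.
Qed.

Lemma natC_add : forall a b, natC (a + b) = Cadd (natC a) (natC b).
Proof. intros; unfold natC, RtoC, Cadd; simpl; rewrite plus_INR; f_equal; ring. Qed.

Section S.
Variables (q : R) (m : nat) (r : Cx).

Lemma W_zero : forall n k, (n < k)%nat -> W q m r n k = C0.
Proof.
  induction n; destruct k; intros H; try lia; try reflexivity.
  cbn [W]. destruct (Nat.leb (S k) (S n)) eqn:E; [|reflexivity].
  apply Nat.leb_le in E; lia.
Qed.

Lemma W_rec : forall n k, (k <= n)%nat ->
  W q m r (S n) (S k) = Cadd (Cmul (qpow q (Cadd (natC (m*k)) r)) (W q m r n k))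
     (Cmul (qint q (Cadd (natC (m * S k)) r)) (W q m r n (S k))).
Proof.
  intros n k H. cbn [W]. replace (Nat.leb (S k) (S n)) with true. reflexivity.
  symmetry; apply Nat.leb_le; lia.
Qed.

Lemma key : forall n k j, (k + j <= n)%nat ->
  W q m r n (k+j) = Csub (Cmul (qpow q (Csub (Copp r) (natC (m*(k+j))))) (W q m r (S n) (k+j+1)))
    (Cmul (Cmul (qpow q (Cadd (Csub (Copp r) (natC (m*(k+1+j)))) (natC m)))
                (qint q (Cadd (natC (m*(k+1+j))) r))) (W q m r n (k + S j))).
Proof.
  intros n k j H.
  replace (k+j+1)%nat with (S (k+j)) by lia.
  replace (k+1+j)%nat with (S (k+j)) by lia.
  replace (k + S j)%nat with (S (k+j)) by lia.
  rewrite W_rec by lia.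
  set (p := (k+j)%nat).
  replace (m * S p)%nat with (m*p + m)%nat by ring.
  rewrite natC_add.
  replace (Cadd (Csub (Copp r) (Cadd (natC (m * p)) (natC m))) (natC m))
    with (Csub (Copp r) (natC (m*p))) by ring.
  set (Q := qpow q (Csub (Copp r) (natC (m * p)))).
  set (E := qpow q (Cadd (natC (m * p)) r)).
  assert (QE : Cmul Q E = C1).
  { unfold Q, E. rewrite <- qpow_add.
    replace (Cadd (Csub (Copp r) (natC (m * p))) (Cadd (natC (m * p)) r)) with C0 by ring.
    apply qpow_0. }
  transitivity (Cmul (Cmul Q E) (W q m r n p)); [rewrite QE; ring | ring].
Qed.

End S.

Lemma sign_S : forall N, RtoC ((-1) ^ S N) = Copp (RtoC ((-1)^N)).
Proof. intros; apply Cx_eq; unfold RtoC, Copp; simpl; ring. Qed.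

Lemma tele (q : R) (m : nat) (r : Cx) (n k : nat) : forall N, (k + N <= S n)%nat ->
  W q m r n k =
  Cadd (Csum (fun j =>
          Cmul (RtoC ((-1) ^ j))
          (Cmul (qpow q (Csub (Copp r) (natC (m * (k + j)))))
          (Cmul (Cprod (fun i =>
                          let h := (k + 1 + i)%nat in
                          Cmul (qpow q (Cadd (Csub (Copp r) (natC (m * h))) (natC m)))
                               (qint q (Cadd (natC (m * h)) r))) j)
                (W q m r (S n) (k + j + 1))))) N)
   (Cmul (RtoC ((-1)^N)) (Cmul (Cprod (fun i =>
                          let h := (k + 1 + i)%nat in
                          Cmul (qpow q (Cadd (Csub (Copp r) (natC (m * h))) (natC m)))
                               (qint q (Cadd (natC (m * h)) r))) N) (W q m r n (k+N)))).
Proof.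
  induction N; intros H.
  - cbn [Csum Cprod]. rewrite Nat.add_0_r.
    replace (RtoC ((-1)^0)) with C1 by reflexivity. ring.
  - rewrite IHN at 1 by lia.
    cbn [Csum Cprod]. cbv beta zeta.
    rewrite (key q m r n k N) by lia.
    rewrite sign_S. ring.
Qed.

Theorem theorem1 (q : R) (m : nat) (r : Cx)
  (hq : 0 < q) (hq1 : q <> 1) (hm : (0 < m)%nat)
  (n k : nat) (hk : (k <= n)%nat) :
  W q m r n k =
  Csum (fun j =>
          Cmul (RtoC ((-1) ^ j))
          (Cmul (qpow q (Csub (Copp r) (natC (m * (k + j)))))
          (Cmul (Cprod (fun i =>
                          let h := (k + 1 + i)%nat in
                          Cmul (qpow q (Cadd (Csub (Copp r) (natC (m * h))) (natC m)))
                               (qint q (Cadd (natC (m * h)) r))) j)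
                (W q m r (S n) (k + j + 1)))))
       (n - k + 1).
Proof.
  rewrite (tele q m r n k (n - k + 1)) at 1 by lia.
  rewrite (W_zero q m r n (k + (n - k + 1))) by lia.
  ring.
Qed.
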